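(* Let $p$ be an odd prime, $n\ge1$, $G=\mu_{p^n}$ and let $\mathcal{P}$ be a unital partition of $G$ satisfying condition (p). Let $0\le k\le n-1$, fix $A\in\mathcal{P}_k$ and a generator $x$ of $G$ with $y:=x^{p^k}\in A$, and let $b_k$ be the integer with $u_k=\phi(p^{b_k})$. Then for every integer $i$, $$A_{i,k}=\{x^{p^k(\alpha^i+sp^{b_k})}\mid s=0,1,\dots,p^{n-k-b_k}-1\}.$$
   Context: A unital partition of a finite commutative group $G$ is a partition $G=\{1\}\sqcup A_0\sqcup\dots\sqcup A_s$ such that, with $a_i=\sum_{x\in A_i}x\in\mathbb{Z}[G]$, the $\mathbb{Z}$-span of $1$ and the $a_i$ is closed under multiplication in $\mathbb{Z}[G]$. Condition (p): $|B|$ is a power of $p$ for every $B\in\mathcal{P}$. $B_k=\{x^{p^k}\mid x\text{ a generator of }G\}$, $\mathcal{P}_k=\{B\in\mathcal{P}\mid B\cap B_k\neq\emptyset\}$. Fix an integer $\alpha$ generating $(\mathbb{Z}/p^n\mathbb{Z})^\times$; $u_k$ is the smallest positive integer with $y^{\alpha^{u_k}}\in A$; under (p) one has $u_k=\phi(p^{b_k})$ with $1\le b_k\le n-k$. For $X\subseteq G$, $X^m=\{z^m:z\in X\}$, and $A_{i,k}:=A^{\alpha^i}$. *)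

(* Defs.v *)
From HB Require Import structures.
From mathcomp Require Import all_boot all_order all_algebra all_fingroup all_solvable.
Set Implicit Arguments. Unset Strict Implicit. Unset Printing Implicit Defensive.
Import GRing.Theory.

Section UnitalPartition.
Variable gT : finGroupType.

(* coefficient of z in the product (sum_{u in B} u)(sum_{v in C} v) in Z[G] *)
Definition grp_coef (B C : {set gT}) (z : gT) : nat :=
  #|[set uv in setX B C | (uv.1 * uv.2)%g == z]|.

(* P is a unital partition of G: a partition of G having {1} as a block, such
   that the Z-span of the block sums is closed under multiplication in Z[G]. *)
Definition unital_partition (G : {set gT}) (P : {set {set gT}}) : Prop :=
  [/\ partition P G, [set 1%g] \in P &
    forall B C, B \in P -> C \in P ->
      exists c : {set gT} -> int, forall z : gT,
        Posz (grp_coef B C z) = (\sum_(D in P) c D * Posz (z \in D))%R].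

Definition cond_p (p : nat) (P : {set {set gT}}) : Prop :=
  forall B, B \in P -> exists e, #|B| = (p ^ e)%N.

Definition Bset (G : {set gT}) (p k : nat) : {set gT} :=
  [set (z ^+ (p ^ k))%g | z in [set g in G | generator G g]].

Definition Pset (G : {set gT}) (P : {set {set gT}}) (p k : nat) : {set {set gT}} :=
  [set B in P | B :&: Bset G p k != set0].

Definition set_pow (X : {set gT}) (m : nat) : {set gT} := [set (z ^+ m)%g | z in X].

End UnitalPartition.

Definition generates_units (N alpha : nat) : Prop :=
  coprime alpha N /\
  forall j, coprime j N -> exists i, alpha ^ i = j %[mod N].

Definition alpha_pow (N alpha : nat) (i : int) : nat :=
  val ((alpha%:R : 'Z_N) ^ i)%R.

(* Main.v *)
Require Import Defs.
From HB Require Import structures.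
From mathcomp Require Import all_boot all_order all_algebra all_fingroup all_solvable.
Set Implicit Arguments. Unset Strict Implicit. Unset Printing Implicit Defensive.

Section Schur.
Variables (gT : finGroupType) (G : {group gT}) (P : {set {set gT}}).
Hypothesis partP : partition P G.

Definition Sfun (f : gT -> nat) :=
  (forall z, z \notin G -> f z = 0) /\ forall D, D \in P -> {in D &, forall z z', f z = f z'}.

Definition conv (f g : gT -> nat) z := \sum_(a : gT) f a * g (a^-1 * z)%g.

Lemma grp_coefE B C z :
  grp_coef B C z = \sum_(a : gT) (a \in B) * (a^-1 * z \in C)%g.
Proof.
rewrite /grp_coef.
have -> : [set uv in setX B C | (uv.1 * uv.2)%g == z] =
   (fun a => (a, a^-1 * z)%g) @: [set a in B | (a^-1 * z)%g \in C].
  apply/setP => [[u v]]; rewrite !inE /=; apply/idP/imsetP.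
    case/andP => /andP[uB vC] /eqP Hz; exists u; first by rewrite inE uB -Hz mulKg.
    by rewrite -Hz mulKg.
  case=> a; rewrite inE => /andP[aB aC] [-> ->]; rewrite aB aC /=.
  by rewrite mulKVg.
rewrite card_imset; last by move=> a b [].
rewrite -sum1_card big_mkcond /=; apply: eq_bigr => a _; rewrite inE.
by case: (a \in B); case: (_ \in C).
Qed.

Lemma partP_sub D : D \in P -> D \subset G.
Proof.
move=> DP; case/and3P: partP => /eqP <- _ _; exact: bigcup_sup.
Qed.

Lemma partP_uniq D E z : D \in P -> E \in P -> z \in D -> z \in E -> D = E.
Proof.
move=> DP EP zD zE; case/and3P: partP => _ tP _.
by rewrite -(def_pblock tP DP zD) (def_pblock tP EP zE).
Qed.

Lemma partP_ex z : z \in G -> exists2 D, D \in P & z \in D.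
Proof.
move=> zG; case/and3P: partP => /eqP cP tP _.
exists (pblock P z); first by rewrite pblock_mem // cP.
by rewrite mem_pblock cP.
Qed.

Lemma partP_n0 D : D \in P -> repr D \in D.
Proof.
move=> DP; case/and3P: partP => _ _ n0.
have : D != set0 by apply: contraNneq n0 => <-.
by case/set0Pn => w wD; exact: mem_repr wD.
Qed.

Lemma Sfun_exp f : Sfun f -> forall a, f a = \sum_(D in P) f (repr D) * (a \in D).
Proof.
move=> [f0 fc] a; case: (boolP (a \in G)) => aG; last first.
  rewrite f0 // big1 // => D DP.
  by rewrite (negbTE (contra (subsetP (partP_sub DP) a) aG)) muln0.
case: (partP_ex aG) => D DP aD.
rewrite (bigD1 D) //= big1 ?addn0 => [|E /andP[EP nED]].
  by rewrite aD muln1 (fc D DP _ _ aD (partP_n0 DP)).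
case: (boolP (a \in E)) => aE; last by rewrite muln0.
by rewrite (partP_uniq EP DP aE aD) eqxx in nED.
Qed.

Lemma conv_exp f g : Sfun f -> Sfun g -> forall z,
  conv f g z = \sum_(D in P) \sum_(E in P) f (repr D) * g (repr E) * grp_coef D E z.
Proof.
move=> Hf Hg z; rewrite /conv.
transitivity (\sum_(a : gT) \sum_(D in P) \sum_(E in P)
   f (repr D) * g (repr E) * ((a \in D) * ((a^-1 * z)%g \in E))).
  apply: eq_bigr => a _; rewrite (Sfun_exp Hf a) (Sfun_exp Hg (a^-1 * z)%g) big_distrl.
  apply: eq_bigr => D _; rewrite big_distrr; apply: eq_bigr => E _ /=.
  by rewrite mulnACA.
rewrite exchange_big; apply: eq_bigr => D _; rewrite exchange_big.
by apply: eq_bigr => E _; rewrite -big_distrr grp_coefE.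
Qed.

Hypothesis closP : forall B C D, B \in P -> C \in P -> D \in P ->
  {in D &, forall z z', grp_coef B C z = grp_coef B C z'}.

Lemma conv_Sfun f g : Sfun f -> Sfun g -> Sfun (conv f g).
Proof.
move=> Hf Hg; split=> [z zG|D DP z z' zD z'D].
  rewrite /conv big1 // => a _.
  case: (boolP (a \in G)) => aG; last by rewrite Hf.1.
  rewrite Hg.1 ?muln0 //; apply: contra zG => H.
  by rewrite -(mulKVg a z) groupM.
rewrite !conv_exp //; apply: eq_bigr => B BP; apply: eq_bigr => C CP.
by rewrite (closP BP CP DP zD z'D).
Qed.

End Schur.


Section Cnt.
Variables (gT : finGroupType) (Y : {set gT}).

Definition tset q z := [set t : {ffun 'I_q -> gT} |
   [forall i, t i \in Y] && ((\prod_i t i)%g == z)].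
Definition cnt q z := #|tset q z|.

Definition consf q (a : gT) (t : {ffun 'I_q -> gT}) : {ffun 'I_q.+1 -> gT} :=
  [ffun i => if unlift ord0 i is Some j then t j else a].

Lemma consf0 q a (t : {ffun 'I_q -> gT}) : consf a t ord0 = a.
Proof. by rewrite ffunE unlift_none. Qed.
Lemma consfS q a (t : {ffun 'I_q -> gT}) j : consf a t (lift ord0 j) = t j.
Proof. by rewrite ffunE liftK. Qed.

Lemma cnt0 z : cnt 0 z = (z == 1%g).
Proof.
rewrite /cnt /tset; case: eqP => [->|nz].
  have -> : [set t : {ffun 'I_0 -> gT} | [forall i, t i \in Y] && ((\prod_i t i)%g == 1%g)] = setT.
    by apply/setP => t; rewrite !inE big_ord0 eqxx andbT; apply/forallP => -[].
  by rewrite cardsT card_ffun card_ord expn0.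
apply/eqP; rewrite cards_eq0; apply/eqP/setP => t; rewrite !inE big_ord0.
by apply/negP => /andP[_ /eqP E]; apply: nz; rewrite E.
Qed.

Lemma cntS q z : cnt q.+1 z = \sum_(a : gT) (a \in Y) * cnt q (a^-1 * z)%g.
Proof.
rewrite /cnt -sum1_card (partition_big (fun t : {ffun 'I_q.+1 -> gT} => t ord0) predT) //=.
apply: eq_bigr => a _.
case: (boolP (a \in Y)) => aY; last first.
  rewrite mul0n big1 // => t /andP[]; rewrite inE => /andP[/forallP H _] /eqP ta.
  by move: (H ord0); rewrite ta (negbTE aY).
rewrite mul1n -sum1_card.
rewrite (reindex_onto (@consf q a) (fun t : {ffun 'I_q.+1 -> gT} => [ffun j => t (lift ord0 j)])).
  apply: eq_bigl => t; rewrite !inE consf0 eqxx andbT big_ord_recl consf0.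
  under eq_bigr do rewrite consfS.
  have -> : [ffun j => consf a t (lift ord0 j)] = t by apply/ffunP => j; rewrite ffunE consfS.
  rewrite eqxx andbT; congr andb.
    apply/forallP/forallP => H i; first by have := H (lift ord0 i); rewrite consfS.
    by case: (unliftP ord0 i) => [j ->|->]; rewrite ?consfS ?consf0.
  by apply/eqP/eqP => [<-|->]; rewrite ?mulKg ?mulKVg.
move=> t /andP[_ /eqP ta]; apply/ffunP => i; rewrite ffunE.
by case: (unliftP ord0 i) => [j ->|->]; rewrite ?liftK ?unlift_none ?ffunE // ta.
Qed.

End Cnt.


Section Rot.
Variables (gT : finGroupType) (q : nat).

Definition ract (t : {ffun 'I_q -> gT}) (s : {perm 'I_q}) : {ffun 'I_q -> gT} :=
  [ffun i => t ((s^-1)%g i)].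
Lemma ract1 : ract^~ 1%g =1 id.
Proof. by move=> t; apply/ffunP => i; rewrite ffunE invg1 perm1. Qed.
Lemma ractM t : act_morph ract t.
Proof. by move=> a b; apply/ffunP => i; rewrite !ffunE invMg permM. Qed.
Definition rot_action := TotalAction ract1 ractM.

Definition sigrot := perm (can_inj (@ordSK q)).

Lemma iter_ordS k (i : 'I_q) : val (iter k (@ordS q) i) = (i + k) %% q.
Proof.
elim: k => [|k IH] /=; first by rewrite addn0 modn_small.
by rewrite IH -addn1 modnDml -addnA addn1.
Qed.

Lemma sig_q : (sigrot ^+ q = 1)%g.
Proof.
apply/permP => i; rewrite permX perm1; apply/val_inj.
have -> : iter q sigrot i = iter q (@ordS q) i by apply: eq_iter; exact: permE.
by rewrite iter_ordS modnDr modn_small.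
Qed.
End Rot.

Lemma fix_const (T : Type) q (f : 'I_q -> T) :
  (forall i, f (ordS i) = f i) -> forall i j, f i = f j.
Proof.
case: q f => [f _ []//|q f H].
suff E i : f i = f ord0 by move=> i j; rewrite E (E j).
case: i => m; elim: m => [|m IH] lt; first by congr f; apply: val_inj.
have lt' : m < q.+1 by apply: ltnW.
rewrite -(IH lt') -(H (Ordinal lt')); congr f; apply/val_inj => /=; rewrite modn_small //.
Qed.

Section Frob.
Local Open Scope group_scope.
Variables (gT : finGroupType) (G : {group gT}) (Y : {set gT}) (q : nat).
Hypotheses (abG : abelian G) (YG : Y \subset G) (qp : prime q) (coq : coprime #|G| q).

Lemma cnt_mod z : cnt Y q z = #|[set c in Y | (c ^+ q == z)%g]| %[mod q].
Proof.
have [q' qE] : exists q', q = q'.+1 by case: q qp => // q' _; exists q'.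
pose g := ((sigrot q)^-1)%g.
have rg t : ract t g = [ffun i => t (ordS i)].
  by apply/ffunP => i; rewrite !ffunE invgK permE.
have pg : q.-group <[g]>.
  rewrite /pgroup -orderE; apply: pnat_dvd (pnat_id qp).
  by rewrite order_dvdn expgVn sig_q invg1.
have acts : [acts <[g]>, on tset Y q z | rot_action gT q].
  rewrite /= cycle_subG; apply/astabsP => t /=; rewrite rg !inE.
  have -> : [forall i, [ffun i0 => t (ordS i0)] i \in Y] = [forall i, t i \in Y].
    apply/forallP/forallP => H i; last by rewrite ffunE.
    by rewrite -(ord_predK i); move: (H (ord_pred i)); rewrite ffunE.
  case: (boolP [forall i, t i \in Y]) => //= /forallP tY.
  have tG i : t i \in G by apply: (subsetP YG).
  congr (_ == z); rewrite /=.
  move: t tY tG {rg}; rewrite qE => t tY tG.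
  rewrite big_ord_recr big_ord_recl /=.
  have -> : \big[mulg/1%g]_(i < q') [ffun i0 => t (ordS i0)] (widen_ord (leqnSn q') i)
          = \big[mulg/1%g]_(i < q') t (lift ord0 i).
    apply: eq_bigr => i _; rewrite ffunE; congr (t _); apply/val_inj => /=.
    by rewrite /bump /= add1n modn_small // ltnS.
  rewrite ffunE; have -> : ordS ord_max = ord0 :> 'I_q'.+1.
    by apply/val_inj; rewrite /= modnn.
  have XG : \big[mulg/1%g]_(i < q') t (lift ord0 i) \in G.
    by apply: group_prod => i _.
  by have := centsP abG _ (tG ord0) _ XG; rewrite /commute => ->.
rewrite /cnt (pgroup_fix_mod pg acts) afix_cycle.
have o0 : 'I_q by rewrite qE; exact: ord0.
pose to := rot_action gT q.
have -> : tset Y q z :&: 'Fix_to[g] =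
   (fun c : gT => [ffun _ : 'I_q => c]) @: [set c in Y | c ^+ q == z].
  apply/setP => t; rewrite in_setI; apply/andP/imsetP.
    case; rewrite inE => /andP[/forallP tY /eqP tz] /afix1P /= ft.
    have tc i : t i = t o0.
      apply: (fix_const (f := t)) => j.
      by have := congr1 (fun f : {ffun 'I_q -> gT} => f j) ft; rewrite rg ffunE.
    exists (t o0); last by apply/ffunP => i; rewrite ffunE tc.
    rewrite inE tY -tz /=; apply/eqP; rewrite (eq_bigr (fun=> t o0)); last by move=> i _; exact: tc.
    by rewrite prodg_const card_ord.
  case=> c; rewrite inE => /andP[cY /eqP cz] ->; split.
    rewrite inE; apply/andP; split; first by apply/forallP => i; rewrite ffunE.
    rewrite -cz (eq_bigr (fun=> c)); last by move=> i _; rewrite ffunE.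
    by rewrite prodg_const card_ord.
  by apply/afix1P => /=; rewrite rg; apply/ffunP => i; rewrite !ffunE.
rewrite card_imset //.
by move=> a b /ffunP /(_ o0); rewrite !ffunE.
Qed.
End Frob.


Section Schur2.
Variables (gT : finGroupType) (G : {group gT}) (P : {set {set gT}}).
Hypotheses (partP : partition P G) (oneP : [set 1%g] \in P) (abG : abelian G).
Hypothesis closP : forall B C D, B \in P -> C \in P -> D \in P ->
  {in D &, forall z z', grp_coef B C z = grp_coef B C z'}.

Definition Sset (Y : {set gT}) := Sfun G P (fun a => nat_of_bool (a \in Y)).

Lemma Sset_sub Y : Sset Y -> Y \subset G.
Proof.
case=> H _; apply/subsetP => a aY; apply: contraT => aG.
by have := H a aG; rewrite aY.
Qed.

Lemma Sset_mem Y D z z' : Sset Y -> D \in P -> z \in D -> z' \in D -> (z \in Y) = (z' \in Y).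
Proof.
case=> _ H DP zD z'D; have := H D DP z z' zD z'D.
by case: (z \in Y); case: (z' \in Y).
Qed.

Lemma Sset_block X : X \in P -> Sset X.
Proof.
move=> XP; split=> [z zG|D DP z z' zD z'D].
  case: (boolP (z \in X)) => // zX.
  by move: zG; rewrite (subsetP (partP_sub partP XP) z zX).
case: (boolP (z \in X)) => zX; case: (boolP (z' \in X)) => z'X //.
  by rewrite -(partP_uniq partP DP XP zD zX) z'D in z'X.
by rewrite -(partP_uniq partP DP XP z'D z'X) zD in zX.
Qed.

Lemma Sfun_ext f g : f =1 g -> Sfun G P f -> Sfun G P g.
Proof.
move=> fg [H1 H2]; split=> [z zG|D DP z z' zD z'D]; rewrite -!fg; [exact: H1| exact: H2 zD z'D].
Qed.

Lemma cnt_Sfun (Y : {set gT}) q : Sset Y -> Sfun G P (cnt Y q).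
Proof.
move=> SY; elim: q => [|q IH].
  apply: (Sfun_ext (f := fun z => nat_of_bool (z == 1%g))) => [z|]; first by rewrite cnt0.
  split=> [z zG|D DP z z' zD z'D].
    by case: eqP => // z1; rewrite z1 group1 in zG.
  have := Sset_mem (Sset_block oneP) DP zD z'D; rewrite !inE.
  by move=> ->.
apply: (Sfun_ext (f := conv (fun a => nat_of_bool (a \in Y)) (cnt Y q))) => [z|].
  by rewrite cntS.
exact: conv_Sfun.
Qed.

Lemma card_powfib (Y : {set gT}) q z : Y \subset G -> coprime #|G| q ->
  #|[set c in Y | (c ^+ q == z)%g]| = (z \in set_pow Y q).
Proof.
move=> YG co; case: (boolP (z \in set_pow Y q)) => [/imsetP[c cY ->]|nz].
  apply/eqP/cards1P; exists c; apply/setP => d; rewrite !inE.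
  apply/andP/eqP => [[dY /eqP E]|->]; last by rewrite cY eqxx.
  have K := expgK co.
  by rewrite -(K d (subsetP YG d dY)) E K // (subsetP YG c cY).
apply/eqP; rewrite cards_eq0; apply/eqP/setP => d; rewrite !inE.
apply/negP => /andP[dY /eqP E]; move/negP: nz; apply; apply/imsetP; exists d => //.
Qed.

Lemma Sset_powq (Y : {set gT}) q : Sset Y -> prime q -> coprime #|G| q -> Sset (set_pow Y q).
Proof.
move=> SY qp co; have YG := Sset_sub SY.
split=> [z zG|D DP z z' zD z'D].
  case: (boolP (z \in set_pow Y q)) => // /imsetP[c cY E].
  by move: zG; rewrite E groupX // (subsetP YG c cY).
have H w : nat_of_bool (w \in set_pow Y q) = cnt Y q w %% q.
  rewrite (cnt_mod abG YG qp) card_powfib //.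
  by case: (_ \in _); rewrite ?mod0n // modn_small // prime_gt1.
by rewrite !H ((cnt_Sfun q SY).2 D DP z z' zD z'D).
Qed.

Lemma set_powM (Y : {set gT}) a b : set_pow Y (a * b) = set_pow (set_pow Y a) b.
Proof.
apply/setP => z; apply/imsetP/imsetP => [[c cY ->]|[w /imsetP[c cY ->] ->]].
  by exists (c ^+ a)%g; [apply/imsetP; exists c|rewrite expgM].
by exists c => //; rewrite expgM.
Qed.

Lemma set_pow1 (Y : {set gT}) : set_pow Y 1 = Y.
Proof.
apply/setP => z; apply/imsetP/idP => [[c cY ->]|zY]; first by rewrite expg1.
by exists z; rewrite ?expg1.
Qed.

Lemma Sset_pow (Y : {set gT}) m : Sset Y -> 0 < m -> coprime #|G| m -> Sset (set_pow Y m).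
Proof.
move=> SY; elim/ltn_ind: m => m IH m0 co.
case: (ltngtP m 1) => [|m1|->]; last by rewrite set_pow1.
  by rewrite ltnS leqn0 => /eqP m00; rewrite m00 in m0.
have pp := pdiv_prime m1; have pd := pdiv_dvd m.
have mE : m = (m %/ pdiv m) * pdiv m by rewrite divnK.
have m'0 : 0 < m %/ pdiv m by rewrite divn_gt0 ?prime_gt0 // dvdn_leq.
rewrite mE set_powM; apply: Sset_powq => //.
  apply: IH => //; first by rewrite ltn_Pdiv // prime_gt1.
  by apply: coprime_dvdr co; apply: dvdn_div.
by apply: coprime_dvdr co.
Qed.

Lemma pow_inv m w : w \in G -> coprime #|G| m ->
  (w ^+ (m * m ^ (totient #|G|).-1))%g = w.
Proof.
move=> wG co; rewrite -expnS prednK ?totient_gt0 ?cardG_gt0 //.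
rewrite -(expg_mod _ (expg_cardG wG)) Euler_exp_totient; last by rewrite coprime_sym.
by rewrite (expg_mod _ (expg_cardG wG)) expg1.
Qed.

Lemma block_pow X m : X \in P -> 0 < m -> coprime #|G| m -> set_pow X m \in P.
Proof.
move=> XP m0 co.
have SX := Sset_block XP; have SXm := Sset_pow SX m0 co.
have XG := partP_sub partP XP.
have x0X := partP_n0 partP XP.
have zXm : (repr X ^+ m)%g \in set_pow X m by apply/imsetP; exists (repr X).
have zG : (repr X ^+ m)%g \in G by rewrite groupX // (subsetP XG).
case: (partP_ex partP zG) => D DP zD.
have DXm : D \subset set_pow X m.
  by apply/subsetP => w wD; rewrite (Sset_mem SXm DP wD zD).
pose m' := (m ^ (totient #|G|).-1)%N.
have m'0 : 0 < m' by rewrite expn_gt0 m0.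
have com' : coprime #|G| m' by rewrite coprimeXr.
have SDm := Sset_pow (Sset_block DP) m'0 com'.
have DmX : set_pow D m' \subset X.
  apply/subsetP => w /imsetP[d dD ->].
  case/imsetP: (subsetP DXm d dD) => c cX ->.
  by rewrite -expgM pow_inv // (subsetP XG).
have w0 : (repr D ^+ m')%g \in set_pow D m'.
  by apply/imsetP; exists (repr D) => //; exact: (partP_n0 partP DP).
have XDm : X \subset set_pow D m'.
  apply/subsetP => w wX.
  by rewrite (Sset_mem SDm XP wX (subsetP DmX _ w0)).
have -> : set_pow X m = D => //.
apply/eqP; rewrite eq_sym eqEcard DXm /=.
apply: leq_trans (leq_imset_card _ _) _.
apply: leq_trans (subset_leq_card XDm) _.
exact: leq_imset_card.
Qed.
End Schur2.


Lemma arith p N (f : nat -> nat) b e r0 :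
  prime p -> odd p -> (forall r, f r = 0 \/ f r = totient (p ^ r)) -> f 0 = 0 ->
  r0 < N -> f r0 = totient (p ^ r0) ->
  \sum_(r < N) f r = totient (p ^ b) * p ^ e ->
  [/\ 0 < b, (forall r, r < N -> r != r0 -> f r = 0) & r0 = b + e].
Proof.
move=> pp podd fv f0 r0N fr0 Hs.
have p1 : 1 < p := prime_gt1 pp.
have pm0 : 0 < p.-1 by rewrite -ltnS prednK // ltnW.
have r0pos : 0 < r0.
  case: (posnP r0) fr0 => // ->; rewrite f0 expn0.
  by move=> E; have := totient_gt0 1; rewrite -E.
pose c r := (f r != 0).
have fE r : f r = c r * (p.-1 * p ^ r.-1).
  rewrite /c; case: (fv r) => E; first by rewrite E.
  case: (posnP r) => [r0E|rp]; first by rewrite r0E f0.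
  by rewrite E -lt0n totient_gt0 ?expn_gt0 ?prime_gt0 // mul1n totient_pfactor.
pose S := \sum_(r < N) c r * p ^ r.-1.
have HS : \sum_(r < N) f r = p.-1 * S.
  rewrite /S big_distrr /=; apply: eq_bigr => r _; rewrite fE.
  by rewrite mulnCA.
have c0 : c 0 = false by rewrite /c f0.
have cr0 : c r0 by rewrite /c fr0 -lt0n totient_gt0 expn_gt0 prime_gt0.
case: (posnP b) => [b0|bpos].
  exfalso; move: Hs; rewrite HS b0 expn0 (_ : totient 1 = 1) // mul1n => E.
  have dv : p.-1 %| p ^ e by rewrite -E dvdn_mulr.
  have co : coprime p.-1 (p ^ e).
    apply: coprimeXr; rewrite coprime_sym prime_coprime //.
    apply/negP => /(dvdn_leq pm0); rewrite leqNgt.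
    by rewrite -{2}(prednK (ltnW p1)) ltnSn.
  have : p.-1 = 1.
    by move: co; rewrite /coprime; move/gcdn_idPl: dv => -> /eqP.
  by move=> pE; move: podd; rewrite -(prednK (ltnW p1)) pE.
have SE : S = p ^ (b.-1 + e).
  apply/eqP; rewrite -(eqn_pmul2l pm0) -HS Hs totient_pfactor // expnD mulnA.
  by [].
have exP : exists r, (r < N) && c r by exists r0; rewrite r0N cr0.
case: (ex_minnP exP) => m /andP[mN cm] mmin.
have m0 : 0 < m by case: (posnP m) cm => // ->; rewrite c0.
pose R := \sum_(r < N | r != Ordinal mN) c r * p ^ r.-1.
have SR : S = p ^ m.-1 + R by rewrite /S (bigD1 (Ordinal mN)) //= cm mul1n.
have dR : p ^ m %| R.
  apply: dvdn_sum => r /= rm.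
  case: (boolP (c r)) => cr; last by rewrite mul0n dvdn0.
  have mr : m < r.
    rewrite ltn_neqAle (mmin r) ?ltn_ord ?cr // andbT.
    by apply: contra rm => /eqP mr; apply/eqP/val_inj.
  rewrite mul1n dvdn_exp2l // -ltnS prednK //.
  exact: leq_ltn_trans (leq0n _) mr.
have Eg : m.-1 <= b.-1 + e.
  by rewrite -(leq_exp2l _ _ p1) -SE SR leq_addr.
have El : b.-1 + e < m.
  rewrite ltnNge; apply/negP => H.
  have : p ^ m %| p ^ m.-1.
    have := dvdn_exp2l p H; rewrite -SE SR.
    by rewrite (dvdn_addl _ dR).
  have pg : 0 < p ^ m.-1 by rewrite expn_gt0 prime_gt0.
  move/(dvdn_leq pg); rewrite leq_exp2l //.
  by rewrite leqNgt -{2}(prednK m0) ltnSn.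
have EE : b.-1 + e = m.-1.
  by apply/eqP; rewrite eqn_leq Eg andbT -ltnS prednK.
have R0 : R = 0.
  by apply/eqP; rewrite -(eqn_add2l (p ^ m.-1)) addn0 -SR SE EE.
have cz r : r < N -> r != m -> c r = false.
  move=> rN rm; move/eqP: R0; rewrite sum_nat_eq0 => /forallP /(_ (Ordinal rN)).
  rewrite /= (_ : Ordinal rN != Ordinal mN); last first.
    by apply: contra rm => /eqP [->].
  rewrite /= muln_eq0 expn_eq0 (negbTE (lt0n_neq0 (prime_gt0 pp))) /= orbF.
  by case: (c r).
have mr0 : m = r0.
  by apply/eqP; apply: contraT => nm; have := cz r0 r0N; rewrite eq_sym nm cr0 => /(_ isT).
split=> //.
  by move=> r rN rr0; have := cz r rN; rewrite mr0 rr0 => /(_ isT); rewrite /c => /negbT; rewrite negbK => /eqP.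
by rewrite -(prednK r0pos) -mr0 -EE -addSn prednK.
Qed.


Section Main.
Variables (gT : finGroupType) (G : {group gT}) (p n : nat)
    (P : {set {set gT}}) (alpha : nat) (k : nat) (A : {set gT}) (x : gT)
    (u b : nat).
Hypotheses (pp : prime p) (podd : odd p) (n0 : 0 < n) (cycG : cyclic G)
  (oG : #|G| = p ^ n) (partP : partition P G) (oneP : [set 1%g] \in P)
  (closP : forall B C D, B \in P -> C \in P -> D \in P ->
     {in D &, forall z z', grp_coef B C z = grp_coef B C z'})
  (condp : cond_p p P) (gen : generates_units (p ^ n) alpha) (kn : k < n)
  (AP : A \in P) (gx : generator G x) (yA : (x ^+ (p ^ k))%g \in A)
  (u0 : 0 < u) (yuA : ((x ^+ (p ^ k)) ^+ (alpha ^ u))%g \in A)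
  (umin : forall v, 0 < v < u -> ((x ^+ (p ^ k)) ^+ (alpha ^ v))%g \notin A)
  (ub : u = totient (p ^ b)).

Let y := (x ^+ (p ^ k))%g.
Let abG : abelian G := cyclic_abelian cycG.

Lemma coa : coprime alpha (p ^ n).
Proof. by case: gen. Qed.

Lemma a0 : 0 < alpha.
Proof.
have := coa; case: alpha => // /eqP; rewrite gcd0n => E.
have : 1 < p ^ n by rewrite -{1}(expn0 p) ltn_exp2l ?prime_gt1.
by rewrite -E ltnn.
Qed.

Lemma coaw w : coprime #|G| (alpha ^ w).
Proof. by rewrite coprimeXr // oG coprime_sym coa. Qed.

Lemma aw0 w : 0 < alpha ^ w.
Proof. by rewrite expn_gt0 a0. Qed.

Lemma pow_inj m : coprime #|G| m -> {in G &, injective (fun z => z ^+ m)%g}.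
Proof. by move=> co; apply: can_in_inj (expgK co). Qed.

Lemma AG : A \subset G.
Proof. exact: (partP_sub partP AP). Qed.

Lemma blk w : set_pow A (alpha ^ w) \in P.
Proof. exact: (block_pow partP oneP abG closP AP (aw0 w) (coaw w)). Qed.

Lemma blk_eq w z : z \in A -> z \in set_pow A (alpha ^ w) -> set_pow A (alpha ^ w) = A.
Proof. by move=> zA zw; apply: (partP_uniq partP (blk w) AP zw zA). Qed.

Lemma Au : set_pow A (alpha ^ u) = A.
Proof. by apply: (blk_eq yuA); apply/imsetP; exists y. Qed.

Lemma Aqu q : set_pow A (alpha ^ (q * u)) = A.
Proof.
elim: q => [|q IH]; first by rewrite mul0n expn0 set_pow1.
by rewrite mulSn expnD mulnC set_powM IH Au.
Qed.

Lemma Kmem z w : z \in A -> ((z ^+ (alpha ^ w))%g \in A) = (u %| w).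
Proof.
move=> zA; have zG := subsetP AG z zA.
apply/idP/idP => [H|/dvdnP[q ->]]; last by rewrite -(Aqu q); apply/imsetP; exists z.
rewrite (divn_eq w u) in H *; rewrite dvdn_addr ?dvdn_mull //.
have vu : w %% u < u by rewrite ltn_mod.
set v := w %% u in H vu *; set q := w %/ u in H.
move: H; rewrite expnD mulnC expgM -{1}(Aqu q) => /imsetP[c cA E].
have vA : (z ^+ (alpha ^ v))%g \in A.
  have -> : (z ^+ (alpha ^ v))%g = c; last by [].
  by apply: (pow_inj (coaw (q * u))) => //; rewrite ?groupX // (subsetP AG).
case: (posnP v) => [->|vpos]; first by rewrite dvdn0.
have := umin (v := v); rewrite vpos vu => /(_ isT); apply: contraNT => _.
have E2 : set_pow A (alpha ^ v) = A.
  by apply: (@blk_eq v _ vA); apply/imsetP; exists z.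
by rewrite -E2; apply/imsetP; exists y.
Qed.

Lemma ord_pow a : a \in G -> exists2 m, m <= n & (order a) = p ^ m.
Proof.
move=> aG; have : (order a) %| p ^ n by rewrite -oG order_dvdG.
by case/(dvdn_pfactor _ _ pp) => m mn ->; exists m.
Qed.

Lemma Lpow a w : a \in G -> w \in G -> (order a) = (order w) -> a != 1%g ->
  exists t, w = (a ^+ (alpha ^ t))%g.
Proof.
move=> aG wG oaw a1.
have ea : (cycle a) = (cycle w).
  apply/eqP; rewrite (eq_subG_cyclic cycG) ?cycle_subG //.
  by apply/eqP; exact: oaw.
have : w \in (cycle a) by rewrite ea cycle_id.
case/cycleP => j wj.
have oa1 : 1 < (order a) by rewrite order_gt1.
have cj : coprime (order a) j.
  have := orderXgcd a j; rewrite -wj -oaw => E.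
  have g0 : 0 < gcdn (order a) j by rewrite gcdn_gt0 ltnW.
  rewrite /coprime; apply/eqP/anti_leq; rewrite g0 andbT.
  case: (ltnP 1 (gcdn (order a) j)) => // g1.
  by have := ltn_Pdiv g1 (ltnW oa1); rewrite -E ltnn.
have pa : p %| (order a).
  case: (ord_pow aG) => m _ am; move: oa1; rewrite am.
  by case: m {am} => [|m]; rewrite ?expn0 ?ltnn // expnS dvdn_mulr.
have cjp : coprime j (p ^ n).
  by rewrite coprime_pexpr // coprime_sym (coprime_dvdl pa).
case: gen => _ /(_ j cjp) [t ht]; exists t.
rewrite wj; apply/eqP; rewrite eq_expg_mod_order; apply/eqP.
have dv : (order a) %| p ^ n by rewrite -oG order_dvdG.
by rewrite -(modn_dvdm _ dv) -ht modn_dvdm.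
Qed.

Lemma ox : (order x) = p ^ n.
Proof. by rewrite -oG; move: gx; rewrite /generator => /eqP ->. Qed.

Lemma xG : x \in G.
Proof. by move: gx; rewrite /generator => /eqP ->; exact: cycle_id. Qed.

Lemma oy : (order y) = p ^ (n - k).
Proof.
rewrite orderXdiv ox ?expnB ?prime_gt0 ?(ltnW kn) //.
by rewrite dvdn_exp2l ?(ltnW kn).
Qed.

Lemma A1 z : z \in A -> z != 1%g.
Proof.
move=> zA; apply/eqP => z1; rewrite z1 in zA.
have AE := partP_uniq partP AP oneP zA (set11 _).
move: yA; rewrite AE inE => /eqP y1.
have := oy; rewrite /y y1 order1 => /esym/eqP; rewrite -(expn0 p) eqn_exp2l ?prime_gt1 //.
by rewrite subn_eq0 leqNgt kn.
Qed.
Definition T := (fun va : 'I_u * gT => (va.2 ^+ (alpha ^ va.1))%g) @: setX [set: 'I_u] A.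

Lemma inj_aux (v v' : nat) a a' : v <= v' < u -> a \in A -> a' \in A ->
  (a ^+ (alpha ^ v))%g = (a' ^+ (alpha ^ v'))%g -> v = v' /\ a = a'.
Proof.
move=> /andP[vv' v'u] aA a'A E.
have aG := subsetP AG a aA; have a'G := subsetP AG a' a'A.
have E2 : a = (a' ^+ (alpha ^ (v' - v)))%g.
  apply: (pow_inj (coaw v)) => //; first by rewrite groupX.
  by rewrite /= E -expgM -expnD subnK.
have := Kmem (v' - v) a'A; rewrite -E2 aA => /esym dv.
have vv : v' - v = 0.
  apply/eqP; apply: contraT => nz.
  have pos : 0 < v' - v by rewrite lt0n.
  have := dvdn_leq pos dv.
  by rewrite leqNgt (leq_ltn_trans (leq_subr v v') v'u).
have vE : v = v' by apply/eqP; rewrite eqn_leq vv' /= -subn_eq0 vv.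
by split=> //; rewrite E2 vv expn0 expg1.
Qed.

Lemma cardT : #|T| = u * #|A|.
Proof.
rewrite card_in_imset ?cardsX ?cardsT ?card_ord // => [[v a] [v' a']].
rewrite !inE /= => aA a'A E.
case: (leqP v v') => vv'.
  have [E1 E2] := inj_aux (v := v) (v' := v') (ltac:(by rewrite vv' ltn_ord)) aA a'A E.
  by rewrite E2; congr pair; apply: val_inj.
have [E1 E2] := inj_aux (v := v') (v' := v) (ltac:(by rewrite (ltnW vv') ltn_ord)) a'A aA (esym E).
by rewrite E2; congr pair; apply: val_inj.
Qed.

Lemma TG : T \subset G.
Proof.
apply/subsetP => w /imsetP[[v a]]; rewrite inE /= => /andP[_ aA] ->.
by rewrite groupX // (subsetP AG).
Qed.

Lemma T1 : 1%g \notin T.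
Proof.
apply/negP => /imsetP[[v a]]; rewrite inE /= => /andP[_ aA] E.
have := A1 aA; rewrite (pow_inj (coaw v) (subsetP AG a aA) (group1 G)) ?eqxx //.
by rewrite /= expg1n E.
Qed.

Lemma AT : A \subset T.
Proof.
apply/subsetP => a aA; apply/imsetP; exists (Ordinal u0, a); first by rewrite !inE aA.
by rewrite /= expn0 expg1.
Qed.

Lemma Tclos t w : t \in T -> w \in G -> order w = order t -> w \in T.
Proof.
case/imsetP => [[v a]]; rewrite inE /= => /andP[_ aA] -> wG ow.
have aG := subsetP AG a aA.
case: (Lpow (a := (a ^+ (alpha ^ v))%g) (w := w)) => //; first by rewrite groupX.
  apply: contra (A1 aA) => /eqP E; apply/eqP.
  by apply: (pow_inj (coaw v)) => //; rewrite /= expg1n.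
move=> s ->; rewrite -expgM -expnD (divn_eq (v + s) u) expnD expgM.
have uv : (v + s) %% u < u by rewrite ltn_mod.
apply/imsetP; exists (Ordinal uv, (a ^+ (alpha ^ ((v + s) %/ u * u)))%g).
  by rewrite !inE /= Kmem // dvdn_mull.
by [].
Qed.


Definition Om r := [set w in G | order w == p ^ r].

Lemma TOm r : #|T :&: Om r| = 0 \/ (#|T :&: Om r| = totient (p ^ r) /\ Om r \subset T).
Proof.
case: (set_0Vmem (T :&: Om r)) => [->|[t]]; first by rewrite cards0; left.
rewrite !inE => /and3P[tT tG /eqP ot]; right.
have OT : Om r \subset T.
  by apply/subsetP => w; rewrite inE => /andP[wG /eqP ow]; apply: (Tclos tT) => //; rewrite ow ot.
split=> //; rewrite (setIidPr OT) -ot totient_gen; apply: eq_card => w.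
rewrite !inE /generator; apply/andP/idP => [[wG /eqP ow]|/eqP E].
  rewrite (eq_subG_cyclic cycG) ?cycle_subG //; by rewrite -/(order w) -/(order t) ow ot.
have wt : w \in cycle t by rewrite E cycle_id.
have sub : cycle t \subset G by rewrite cycle_subG (subsetP TG).
split; first exact: (subsetP sub).
by rewrite /order -E -/(order t) ot.
Qed.

Lemma sumT : #|T| = \sum_(r < n.+1) #|T :&: Om r|.
Proof.
rewrite -sum1_card (partition_big (fun w => (inord (logn p (order w)) : 'I_n.+1)) predT) //=.
apply: eq_bigr => r _; rewrite -sum1_card; apply: eq_bigl => w.
rewrite !inE; case: (boolP (w \in T)) => //= wT.
have wG := subsetP TG w wT; rewrite wG /=.
case: (ord_pow wG) => m mn ->.
by rewrite pfactorK // eqn_exp2l ?prime_gt1 // -val_eqE /= inordK.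
Qed.

Lemma T0 : #|T :&: Om 0| = 0.
Proof.
apply/eqP; rewrite cards_eq0; apply/eqP/setP => w; rewrite !inE expn0 order_eq1.
apply/negP => /and3P[wT _ /eqP w1].
by move: wT; rewrite w1 (negbTE T1).
Qed.

Lemma yT : y \in T :&: Om (n - k).
Proof.
rewrite !inE (subsetP AT y yA) groupX ?xG //=.
by have := oy; rewrite -/y => ->.
Qed.


Lemma struct e : #|A| = p ^ e ->
  [/\ 0 < b, A \subset Om (n - k) & n - k = b + e].
Proof.
move=> Ae.
have := arith (N := n.+1) (f := fun r => #|T :&: Om r|) (b := b) (e := e) (r0 := n - k) pp podd.
case.
- by move=> r; case: (TOm r) => [->|[-> _]]; [left|right].
- exact: T0.
- by rewrite ltnS leq_subr.
- case: (TOm (n - k)) => [E|[]//].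
  have : 0 < #|T :&: Om (n - k)| by apply/card_gt0P; exists y; exact: yT.
  by rewrite E.
- by rewrite -sumT cardT Ae ub.
move=> bpos fz nkE; split=> //.
apply/subsetP => a aA; have aT := subsetP AT a aA; have aG := subsetP TG a aT.
rewrite inE aG /=; case: (ord_pow aG) => m mn am; rewrite am.
case: (eqVneq m (n - k)) => [->|mnk]; first by rewrite eqxx.
have := fz m (leq_ltn_trans mn (ltnSn n)) mnk; move/eqP; rewrite cards_eq0 => /eqP E.
have : a \in T :&: Om m by rewrite !inE aT aG am eqxx.
by rewrite E inE.
Qed.

Lemma final e m : #|A| = p ^ e -> coprime m p ->
  set_pow A m = [set (x ^+ (p ^ k * (m + s * p ^ b)))%g | s : 'I_(p ^ (n - k - b))].
Proof.
move=> Ae com; case: (struct Ae) => bpos AO nkE.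
have eE : n - k - b = e by rewrite nkE addKn.
rewrite eE.
have coGm : coprime #|G| m by rewrite oG coprime_sym coprime_pexpr.
have pb1 : 1 < p ^ b by rewrite -{1}(expn0 p) ltn_exp2l ?prime_gt1.
have pe0 : 0 < p ^ e by rewrite expn_gt0 prime_gt0.
have coab : coprime alpha (p ^ b).
  by rewrite coprime_pexpr // -(coprime_pexpr _ _ n0) coa.
apply/eqP; rewrite eqEcard; apply/andP; split; last first.
  have cA : #|set_pow A m| = #|A|.
    rewrite card_in_imset // => a a' aA a'A E.
    exact: (pow_inj coGm (subsetP AG a aA) (subsetP AG a' a'A) E).
  rewrite cA.
  by rewrite Ae; apply: leq_trans (leq_imset_card _ _) _; rewrite card_ord.
apply/subsetP => w /imsetP[a aA ->].
have : a \in Om (n - k) by exact: (subsetP AO).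
rewrite inE => /andP[aG /eqP oa].
case: (Lpow (a := y) (w := a)) => //.
- by rewrite groupX // xG.
- by rewrite oa oy.
- exact: A1 yA.
move=> t aE.
have ut : u %| t by rewrite -(Kmem t yA) -aE.
have at1 : alpha ^ t %% p ^ b = 1.
  case/dvdnP: ut => q ->; rewrite mulnC expnM -modnXm ub Euler_exp_totient //.
  by rewrite modnXm exp1n modn_small.
set c := alpha ^ t %/ p ^ b.
have aTE : alpha ^ t = c * p ^ b + 1 by rewrite {1}(divn_eq (alpha ^ t) (p ^ b)) at1.
have sl : (c * m) %% p ^ e < p ^ e by rewrite ltn_mod.
apply/imsetP; exists (Ordinal sl) => //=.
rewrite aE -!expgM; apply/eqP; rewrite eq_expg_mod_order ox.
have pnE : p ^ n = p ^ k * (p ^ e * p ^ b).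
  by rewrite -!expnD [e + b]addnC -nkE subnKC // ltnW.
rewrite pnE -!muln_modr eqn_pmul2l ?expn_gt0 ?prime_gt0 //.
rewrite aTE mulnDl mul1n addnC mulnAC muln_modl.
by rewrite modnDmr.
Qed.
End Main.

Lemma unital_closP (gT : finGroupType) (G : {group gT}) P : unital_partition G P ->
  forall B C D, B \in P -> C \in P -> D \in P ->
  {in D &, forall z z', grp_coef B C z = grp_coef B C z'}.
Proof.
case=> partP _ H B C D BP CP DP.
case: (H B C BP CP) => c Hc.
have key z : z \in D -> Posz (grp_coef B C z) = c D.
  move=> zD; rewrite Hc (bigD1 D) //= zD GRing.mulr1 big1 ?GRing.addr0 // => E /andP[EP ED].
  case: (boolP (z \in E)) => zE; last by rewrite GRing.mulr0.
  by rewrite (partP_uniq partP EP DP zE zD) eqxx in ED.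
move=> z z' zD z'D; have := key z zD; rewrite -(key z' z'D).
by case.
Qed.

Lemma alpha_pow_co p n alpha (i : int) : prime p -> 0 < n -> coprime alpha (p ^ n) ->
  coprime (alpha_pow (p ^ n) alpha i) p.
Proof.
move=> pp n0 co.
have N1 : 1 < p ^ n by rewrite -{1}(expn0 p) ltn_exp2l ?prime_gt1.
rewrite /alpha_pow.
set v := ((alpha%:R : 'Z_(p ^ n)) ^ i)%R.
have uv : v \is a GRing.unit.
  by apply: unitrXz; rewrite unitZpE // coprime_sym.
rewrite -(coprime_pexpr _ _ n0) coprime_sym -unitZpE //.
by rewrite natr_Zp.
Qed.


Unset Implicit Arguments. Set Strict Implicit.

Theorem mainTheorem12 (gT : finGroupType) (G : {group gT}) (p n : nat)
    (P : {set {set gT}}) (alpha : nat) (k : nat) (A : {set gT}) (x : gT)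
    (u b : nat) :
  prime p -> odd p -> 0 < n ->
  cyclic G -> #|G| = p ^ n ->
  unital_partition G P -> cond_p p P ->
  generates_units (p ^ n) alpha ->
  k < n ->
  A \in Pset G P p k ->
  generator G x -> (x ^+ (p ^ k))%g \in A ->
  (* u = u_k: the smallest positive integer with y^(alpha^u) in A, y = x^(p^k) *)
  0 < u -> ((x ^+ (p ^ k)) ^+ (alpha ^ u))%g \in A ->
  (forall v, 0 < v < u -> ((x ^+ (p ^ k)) ^+ (alpha ^ v))%g \notin A) ->
  u = totient (p ^ b) ->
  forall i : int,
    set_pow A (alpha_pow (p ^ n) alpha i) =
    [set (x ^+ (p ^ k * (alpha_pow (p ^ n) alpha i + s * p ^ b)))%g
       | s : 'I_(p ^ (n - k - b))].
Proof.
move=> pp podd n0 cycG oG unP condp gen kn APk gx yA u0 yuA umin ub i.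
have [partP oneP _] := unP.
have closP := unital_closP unP.
have AP : A \in P by move: APk; rewrite inE => /andP[].
case: (condp A AP) => e Ae.
apply: (final pp podd n0 cycG oG partP oneP closP gen kn AP gx yA u0 yuA umin ub Ae).
by apply: alpha_pow_co => //; case: gen.
Qed.
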